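(* Let $A\in\mathbb{F}_q^{m\times k}$ be a nonzero matrix and let $S\subseteq\mathbb{F}_q^n$ satisfy $|S|\ge q^{1+(1-\frac1k)n}$. Then there exist $(x_1,\dots,x_k),(y_1,\dots,y_k)\in S^k$ such that for all $b=(b_1,\dots,b_k)\in\mathbb{F}_q^k$ one has $b_1x_1+\dots+b_kx_k=b_1y_1+\dots+b_ky_k$ if and only if $b$ is a linear combination of the rows of $A$. *)

(* Defs.v *)
From HB Require Import structures.
From mathcomp Require Import all_boot all_order all_algebra all_field.
From mathcomp Require Import reals exp.
Set Implicit Arguments. Unset Strict Implicit. Unset Printing Implicit Defensive.

(* Main.v *)
Require Import Defs.
From HB Require Import structures.
From mathcomp Require Import all_boot all_order all_algebra all_field.
From mathcomp Require Import reals exp.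
From mathcomp Require Import ring.
Import Order.TTheory GRing.Theory Num.Theory.
Local Open Scope ring_scope.
Lemma real_arith (R : realType) (q s k n : nat) : (0 < k)%N -> (0 < q)%N ->
  ((q%:R : R) `^ (1 + (1 - (k%:R)^-1) * n%:R) <= (s%:R : R)) ->
  (q ^ (k + k * n) <= s ^ k * q ^ n)%N.
Proof.
move=> k0 q0 H.
have q0' : (0 : R) < q%:R by rewrite ltr0n.
set e := (1 + _ * _) in H.
have H1 : (q%:R `^ e) ^+ k <= (s%:R : R) ^+ k.
  by apply: lerXn2r => //; rewrite nnegrE ?powR_ge0 ?ler0n.
rewrite -(ler_nat R) natrM !natrX.
apply: le_trans (ler_wpM2r _ H1); last by rewrite exprn_ge0 // ler0n.
rewrite -!powR_mulrn ?ler0n ?powR_ge0 // -powRrM -powRD; last by rewrite pnatr_eq0 -lt0n q0 implybT.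
rewrite le_eqVlt; apply/orP; left; apply/eqP; congr (_ `^ _).
have kn0 : (k%:R : R) != 0 by rewrite pnatr_eq0 -lt0n.
rewrite /e natrD natrM; field.
exact: kn0.
Qed.
Section Comb.
Variables (F : finFieldType) (m k n : nat) (A : 'M[F]_(m, k)).

Lemma coker_vec (b : 'rV[F]_k) : ~~ (b <= A)%MS ->
  exists c : 'cV[F]_k, A *m c = 0 /\ b *m c = 1%:M.
Proof.
rewrite submxE => /matrix0Pn [i [j Hj]].
have AC : A *m cokermx A = 0 by exact: mulmx_coker.
set C := cokermx A in Hj AC *; clearbody C.
exists (((b *m C) i j)^-1 *: (C *m delta_mx j 0)); split.
  by rewrite -scalemxAr mulmxA AC mul0mx scaler0.
rewrite -scalemxAr mulmxA -colE; apply/matrixP => i' j'.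
rewrite !ord1 !mxE; move: Hj; rewrite (ord1 i) mxE => Hj; by rewrite mulVf.
Qed.

Definition K := [set D : 'M[F]_(k, n) | A *m D == 0].
Definition Kb (b : 'rV[F]_k) := [set D in K | b *m D == 0].
Definition Bad := [set D in K | [exists b : 'rV[F]_k, ~~ (b <= A)%MS && (b *m D == 0)]].

Lemma card_Kb b : ~~ (b <= A)%MS -> (#|Kb b| * #|F| ^ n <= #|K|)%N.
Proof.
move=> /coker_vec [c [Ac bc]].
pose h := fun p : 'M[F]_(k, n) * 'rV[F]_n => p.1 + c *m p.2.
have -> : (#|Kb b| * #|F| ^ n = #|setX (Kb b) [set: 'rV[F]_n]|)%N.
  by rewrite cardsX cardsT card_mx mul1n.
rewrite -(card_in_imset (f := h)).
  apply: subset_leq_card; apply/subsetP => D /imsetP [[D1 v] /setXP [HD _] ->].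
  move: HD; rewrite !inE => /andP [HK _].
  by rewrite /h /= mulmxDr mulmxA Ac mul0mx addr0.
move=> [D1 v1] [D2 v2] /setXP [H1 _] /setXP [H2 _]; rewrite /h /= => E.
move: H1 H2; rewrite !inE => /andP [_ /eqP b1] /andP [_ /eqP b2].
have Ev : v1 = v2.
  have := congr1 (mulmx b) E.
  by rewrite !mulmxDr !mulmxA b1 b2 bc !mul1mx !add0r.
by subst v2; move/addIr: E => ->.
Qed.

Lemma card_Bad : (#|Bad| * #|F| ^ n <= (#|F| ^ k - 1) * #|K|)%N.
Proof.
pose P := [pred b : 'rV[F]_k | ~~ (b <= A)%MS].
have H1 : (#|Bad| <= \sum_(b in P) #|Kb b|)%N.
  rewrite -sum1_card.
  apply: (@leq_trans (\sum_(D in Bad) \sum_(b in P) (D \in Kb b : nat))).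
    apply: leq_sum => D; rewrite inE => /andP [HK /existsP [b0 /andP [Pb Db]]].
    rewrite (bigD1 b0) //= inE HK Db; exact: leq_addr.
  rewrite exchange_big /=; apply: leq_sum => b _.
  rewrite -sum1_card big_mkcond /= [X in (_ <= X)%N]big_mkcond /=.
  apply: leq_sum => D _.
  by case: (D \in Bad); case: (D \in Kb b).
have H2 : (#|P| <= #|F| ^ k - 1)%N.
  have -> : (#|F| ^ k - 1 = #|predC1 (0%R : 'rV[F]_k)|)%N.
    by rewrite cardC1 card_mx mul1n subn1.
  apply: subset_leq_card; apply/subsetP => b; rewrite !inE.
  by apply: contraNneq => ->; rewrite sub0mx.
apply: (leq_trans (leq_mul H1 (leqnn _))).
rewrite big_distrl /=.
apply: (@leq_trans (\sum_(b in P) #|K|)).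
  by apply: leq_sum => b Pb; apply: card_Kb.
by rewrite sum_nat_const leq_mul2r H2 orbT.
Qed.

Lemma card_img : (#|[set A *m X | X in [set: 'M[F]_(k, n)]]| * #|K| <= #|F| ^ (k * n))%N.
Proof.
set J := [set A *m X | X in _].
pose pre := fun c : 'M[F]_(m, n) => odflt 0 [pick X | A *m X == c].
have preP c : c \in J -> A *m pre c = c.
  move=> /imsetP [X0 _ ->]; rewrite /pre; case: pickP => [X /eqP //|H].
  by have := H X0; rewrite eqxx.
pose h := fun p : 'M[F]_(m, n) * 'M[F]_(k, n) => pre p.1 + p.2.
rewrite -cardsX -(card_in_imset (f := h)).
  by rewrite -card_mx -cardsT subset_leq_card // subsetT.
move=> [c1 D1] [c2 D2] /setXP [J1 K1] /setXP [J2 K2]; rewrite /h /= => E.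
move: K1 K2; rewrite !inE => /eqP A1 /eqP A2.
have Ec : c1 = c2.
  have := congr1 (mulmx A) E.
  by rewrite !mulmxDr A1 A2 !addr0 !preP.
by subst c2; move/addrI: E => ->.
Qed.

End Comb.

Theorem lemma4p1 (R : realType) (F : finFieldType) (m k n : nat)
    (A : 'M[F]_(m, k)) (S : {set 'rV[F]_n}) :
  A != 0 ->
  ((#|F|%:R : R) `^ (1 + (1 - (k%:R)^-1) * n%:R) <= (#|S|%:R : R)) ->
  exists x y : 'I_k -> 'rV[F]_n,
    [/\ forall i, x i \in S,
        forall i, y i \in S &
        forall b : 'rV[F]_k,
          (\sum_(i < k) b 0 i *: x i = \sum_(i < k) b 0 i *: y i)
          <-> (b <= A)%MS].
Proof.
move=> A0 Hs.
have k0 : (0 < k)%N.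
  by move: A0; clear Hs; case: k A => // A; rewrite thinmx0 eqxx.
have q0 : (0 < #|F|)%N by apply/card_gt0P; exists 0.
have Har := @real_arith R _ _ _ _ k0 q0 Hs.
set q := #|F| in Har q0 *.
pose Bd := @Bad F m k n A.
pose KK := @K F m k n A.
pose T := [set f : {ffun 'I_k -> 'rV[F]_n} | f \in ffun_on S].
have cardT : #|T| = (#|S| ^ k)%N by rewrite cardsE card_ffun_on card_ord.
pose M := fun f : {ffun 'I_k -> 'rV[F]_n} => \matrix_i f i.
pose g := fun f => A *m M f.
pose fib := fun f => [set f' in T | g f' == g f].
have [f Tf Hf] : exists2 f, f \in T & (#|Bd| < #|fib f|)%N.
  case: (boolP [exists f in T, (#|Bd| < #|fib f|)%N]) => [/exists_inP //|/exists_inPn H].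
  exfalso.
  have H1 : (#|T| <= #|g @: T| * #|Bd|)%N.
    rewrite -sum1_card (partition_big_imset g) /= -sum_nat_const.
    apply: leq_sum => c /imsetP [f0 Tf0 ->].
    by rewrite sum1dep_card leqNgt; exact: H f0 Tf0.
  have H2 : (#|g @: T| <= #|[set A *m X | X in [set: 'M[F]_(k, n)]]|)%N.
    apply: subset_leq_card; apply/subsetP => c /imsetP [f0 _ ->].
    by apply/imsetP; exists (M f0).
  have H3 := @card_img F m k n A.
  have H4 := @card_Bad F m k n A.
  have H5 : (#|T| * q ^ n <= (q ^ k - 1) * q ^ (k * n))%N.
    apply: (leq_trans (leq_mul H1 (leqnn _))).
    rewrite -mulnA.
    apply: (leq_trans (leq_mul H2 H4)).
    by rewrite mulnCA; exact: (leq_mul (leqnn _) H3).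
  rewrite cardT in H5.
  have H6 := leq_trans Har H5.
  rewrite expnD in H6.
  have qk : (0 < q ^ k)%N by rewrite expn_gt0 q0.
  have qkn : (0 < q ^ (k * n))%N by rewrite expn_gt0 q0.
  rewrite (leq_pmul2r qkn) in H6.
  by move: H6; rewrite leqNgt ltn_subrL qk.
have [f' Hf' HD] : exists2 f', f' \in fib f & M f - M f' \notin Bd.
  case: (boolP [exists f' in fib f, M f - M f' \notin Bd]) => [/exists_inP //|/exists_inPn H].
  exfalso; move: Hf; rewrite ltnNge => /negP; apply.
  have Minj : injective M.
    move=> f1 f2 E; apply/ffunP => i.
    by have := congr1 (row i) E; rewrite /M !rowK.
  rewrite -(card_in_imset (f := fun f' => M f - M f')); last first.
    by move=> f1 f2 _ _ /= /addrI /oppr_inj /Minj.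
  apply: subset_leq_card; apply/subsetP => D /imsetP [f1 Hf1 ->].
  by have := H f1 Hf1; rewrite negbK.
move: Hf'; rewrite inE => /andP [Tf' /eqP gE].
have Tf2 := Tf; have Tf'2 := Tf'.
move: Tf2 Tf'2; rewrite !inE => /ffun_onP Sf /ffun_onP Sf'.
have sumE (h : {ffun 'I_k -> 'rV[F]_n}) (b : 'rV[F]_k) :
    \sum_(i < k) b 0 i *: h i = b *m M h.
  by rewrite mulmx_sum_row; apply: eq_bigr => i _; rewrite /M rowK.
exists f, f'; split => // b.
rewrite !sumE.
have DK : A *m (M f - M f') = 0.
  by rewrite mulmxBr; move: gE; rewrite /g => ->; rewrite subrr.
split.
  move=> Eb; apply: contraR HD => Hb.
  rewrite inE; apply/andP; split; first by rewrite inE DK.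
  by apply/existsP; exists b; rewrite Hb mulmxBr Eb subrr eqxx.
case/submxP => w ->.
apply/eqP; rewrite -subr_eq0 -mulmxBr -mulmxA DK mulmx0 //.
Qed.
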